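(* Let $R$ be a finite commutative ring with Jacobson radical $\mathcal{J}$, and write $R/\mathcal{J}\cong F_1\times\cdots\times F_\ell$ with each $F_i$ a (finite) field. Then for $n\ge k\ge0$, $$|\mathrm{Gr}^n_k(R)|=|\mathcal{J}|^{k(n-k)}\prod_{i=1}^{\ell}|\mathrm{Gr}^n_k(F_i)|.$$
   Context: For a commutative ring $A$ and $n\ge k\ge0$, the Grassmannian $\mathrm{Gr}^n_k(A)$ is the set of rank $k$ direct summands $V$ of $A^n$ such that $V$ and $A^n/V$ are free. For a field $F$, this is the usual set of $k$-dimensional subspaces of $F^n$. *)

(* Defs.v *)
From HB Require Import structures.
From mathcomp Require Import all_boot all_order all_algebra.
From mathcomp Require Import boolp.
Set Implicit Arguments. Unset Strict Implicit. Unset Printing Implicit Defensive.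
Import GRing.Theory.
Local Open Scope ring_scope.

Section Ideals.
Variable R : finComPzRingType.

Definition is_ideal (I : {set R}) : bool :=
  [&& (0 : R) \in I,
      [forall x, forall y, (x \in I) ==> (y \in I) ==> (x + y \in I)] &
      [forall r, forall x, (x \in I) ==> (r * x \in I)]].

Definition is_maximal_ideal (I : {set R}) : bool :=
  [&& is_ideal I, (1 : R) \notin I &
      [forall K : {set R}, is_ideal K ==> (I \subset K) ==> (K == I) || (K == setT)]].

Definition jacobson : {set R} :=
  [set x | [forall I : {set R}, is_maximal_ideal I ==> (x \in I)]].
End Ideals.

Section Grass.
Variable A : finComPzRingType.
Variable n : nat.

Definition is_submodule (V : {set 'rV[A]_n}) : Prop :=
  (0 : 'rV[A]_n) \in V /\
  (forall x y, x \in V -> y \in V -> x + y \in V) /\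
  (forall (a : A) x, x \in V -> a *: x \in V).

Definition is_direct_summand (V : {set 'rV[A]_n}) : Prop :=
  exists W : {set 'rV[A]_n}, is_submodule W /\
    (forall x, x \in V -> x \in W -> x = 0) /\
    (forall z, exists2 x, x \in V & exists2 y, y \in W & z = x + y).

Definition is_free_of_rank (V : {set 'rV[A]_n}) (k : nat) : Prop :=
  exists B : 'M[A]_(k, n),
    (forall c : 'rV[A]_k, c *m B = 0 -> c = 0) /\
    (forall x, x \in V <-> exists c : 'rV[A]_k, x = c *m B).

(* A^n / V is free: some finite family (rows of C) has images in A^n/V
   forming a basis of A^n/V (spanning and linearly independent modulo V) *)
Definition quotient_is_free (V : {set 'rV[A]_n}) : Prop :=
  exists (m : nat) (C : 'M[A]_(m, n)),
    (forall c : 'rV[A]_m, c *m C \in V -> c = 0) /\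
    (forall z : 'rV[A]_n, exists c : 'rV[A]_m, z - c *m C \in V).

Definition in_Grassmannian (k : nat) (V : {set 'rV[A]_n}) : Prop :=
  [/\ is_submodule V, is_direct_summand V, is_free_of_rank V k & quotient_is_free V].

Definition Grassmannian (k : nat) : {set {set 'rV[A]_n}} :=
  [set V | `[< in_Grassmannian k V >]].
End Grass.

(* Main.v *)
Require Import Defs.
From HB Require Import structures.
From mathcomp Require Import all_boot all_order all_algebra.
From mathcomp Require Import boolp.
Set Implicit Arguments. Unset Strict Implicit. Unset Printing Implicit Defensive.
Import GRing.Theory.
Local Open Scope ring_scope.

Definition unitb (A : finComPzRingType) (x : A) := [exists y, x * y == 1].

Section GL.
Variable A : finComPzRingType.

Definition GLs m := [set P : 'M[A]_m | unitb (\det P)].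

Lemma GLsP m (P : 'M[A]_m) : reflect (exists Q, P *m Q = 1%:M) (P \in GLs m).
Proof.
apply: (iffP idP).
  rewrite inE => /existsP[y /eqP dy]; exists (y *: \adj P).
  by rewrite -scalemxAr mul_mx_adj scale_scalar_mx mulrC dy.
case=> Q PQ; rewrite inE; apply/existsP; exists (\det Q).
by rewrite -det_mulmx PQ det1.
Qed.

Lemma GLs_inv m (P : 'M[A]_m) : P \in GLs m -> exists Q, P *m Q = 1%:M /\ Q *m P = 1%:M.
Proof. by move/GLsP=> [Q PQ]; exists Q; split=> //; apply: mulmx1C. Qed.

Lemma GLsM m (P Q : 'M[A]_m) : P \in GLs m -> Q \in GLs m -> P *m Q \in GLs m.
Proof.
move=> /GLsP[P' HP] /GLsP[Q' HQ]; apply/GLsP; exists (Q' *m P').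
by rewrite mulmxA -(mulmxA P) HQ mulmx1 HP.
Qed.

Lemma GLs1 m : (1%:M : 'M[A]_m) \in GLs m.
Proof. by apply/GLsP; exists 1%:M; rewrite mulmx1. Qed.

End GL.

Section Gr.
Variables (A : finComPzRingType) (k r : nat).

Definition top (P : 'M[A]_(k + r)) : {set 'rV[A]_(k + r)} :=
  [set x | [exists c : 'rV_k, x == c *m usubmx P]].

Lemma mulP_split (P : 'M[A]_(k + r)) (u : 'rV[A]_(k + r)) :
  u *m P = lsubmx u *m usubmx P + rsubmx u *m dsubmx P.
Proof. by rewrite -{1}(hsubmxK u) -{1}(vsubmxK P) mul_row_col. Qed.

Lemma top_gr (P : 'M[A]_(k + r)) : P \in GLs A (k + r) -> in_Grassmannian k (top P).
Proof.
move=> /GLs_inv[Q [PQ QP]].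
set B := usubmx P; set C := dsubmx P.
have inj u : u *m P = 0 -> u = 0.
  by move=> uP; rewrite -[u]mulmx1 -PQ mulmxA uP mul0mx.
have rowP (c : 'rV_k) (d : 'rV_r) : row_mx c d *m P = c *m B + d *m C.
  by rewrite mulP_split row_mxKl row_mxKr.
have topP x : x \in top P <-> exists c, x = c *m B.
  by rewrite inE; split=> [/existsP[c /eqP->]|[c ->]]; [exists c|apply/existsP; exists c].
have subm : is_submodule (top P).
  split; first by apply/topP; exists 0; rewrite mul0mx.
  split.
    by move=> x y /topP[c ->] /topP[d ->]; apply/topP; exists (c + d); rewrite mulmxDl.
  by move=> a x /topP[c ->]; apply/topP; exists (a *: c); rewrite scalemxAl.
split=> //.
- exists [set x | [exists d : 'rV_r, x == d *m C]].
  split.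
    split; first by rewrite inE; apply/existsP; exists 0; rewrite mul0mx.
    split.
      move=> x y; rewrite !inE => /existsP[c /eqP->] /existsP[d /eqP->].
      by apply/existsP; exists (c + d); rewrite mulmxDl.
    move=> a x; rewrite !inE => /existsP[c /eqP->].
    by apply/existsP; exists (a *: c); rewrite scalemxAl.
  split.
    move=> x /topP[c ->]; rewrite inE => /existsP[d /eqP cd].
    have /inj/eqP : row_mx c (- d) *m P = 0 by rewrite rowP cd mulNmx subrr.
    by rewrite row_mx_eq0 => /andP[/eqP-> _]; rewrite mul0mx.
  move=> z; exists (lsubmx (z *m Q) *m B); first by apply/topP; exists (lsubmx (z *m Q)).
  exists (rsubmx (z *m Q) *m C); first by rewrite inE; apply/existsP; exists (rsubmx (z *m Q)).
  by rewrite -mulP_split -mulmxA QP mulmx1.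
- exists B; split; last exact: topP.
  move=> c cB; have /inj/eqP : row_mx c 0 *m P = 0 by rewrite rowP cB mul0mx addr0.
  by rewrite row_mx_eq0 => /andP[/eqP-> _].
- exists r, C; split.
    move=> c /topP[d cd].
    have /inj/eqP : row_mx (- d) c *m P = 0 by rewrite rowP cd mulNmx addNr.
    by rewrite row_mx_eq0 => /andP[_ /eqP->].
  move=> z; exists (rsubmx (z *m Q)); apply/topP; exists (lsubmx (z *m Q)).
  by rewrite -[z in z - _]mulmx1 -QP mulmxA mulP_split addrK.
Qed.

Lemma gr_top (V : {set 'rV[A]_(k + r)}) : in_Grassmannian k V ->
  exists2 P, P \in GLs A (k + r) & top P = V.
Proof.
case=> [subm _ [B [Binj Bspan]] [m [C [Cind Cspan]]]].
have V0 : (0 : 'rV_(k + r)) \in V by case: subm.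
have [triv|ntriv] := eqVneq (1 : A) 0.
  have all0 (x : 'rV[A]_(k + r)) : x = 0.
    by apply/matrixP=> i j; rewrite mxE -[x i j]mulr1 triv mulr0.
  exists 1%:M; first exact: GLs1.
  apply/setP=> x; rewrite (all0 x) V0 inE; apply/existsP; exists 0.
  by rewrite mul0mx.
set f := fun u : 'rV[A]_(k + m) => u *m col_mx B C.
have fsurj z : exists u, f u == z.
  have [c Hc] := Cspan z; have /Bspan[d Hd] := Hc.
  exists (row_mx d c); rewrite /f mul_row_col -Hd subrK //.
have f0 w : f w = 0 -> w = 0.
  rewrite /f -[w]hsubmxK mul_row_col => /eqP; rewrite addr_eq0 => /eqP e.
  have c0 : rsubmx w = 0.
    by apply: Cind; apply/Bspan; exists (- lsubmx w); rewrite mulNmx e opprK.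
  rewrite c0 mul0mx oppr0 in e; rewrite c0 (Binj _ e); apply/eqP; rewrite row_mx_eq0 !eqxx //.
have finj : injective f.
  move=> u u' e; apply/eqP; rewrite -subr_eq0; apply/eqP/f0.
  by rewrite /f mulmxBl; apply/eqP; rewrite subr_eq0; apply/eqP.
pose g z := xchoose (fsurj z).
have gK z : f (g z) = z by apply/eqP/(xchooseP (fsurj z)).
have ginj : injective g by move=> z z' e; rewrite -(gK z) -(gK z') e.
have le1 := leq_card f finj; have le2 := leq_card g ginj.
have ecard : #|{: 'rV[A]_(k + m)}| = #|{: 'rV[A]_(k + r)}| by apply/eqP; rewrite eqn_leq le1 le2.
have gt1 : (1 < #|A|)%N by apply/card_gt1P; exists 1, 0.
move: ecard; rewrite !card_mx => /eqP; rewrite eqn_exp2l // !mul1n eqn_add2l => /eqP emr.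
subst m.
exists (col_mx B C); last first.
  apply/setP=> x; rewrite inE col_mxKu; apply/existsP/idP.
    by case=> c /eqP->; apply/Bspan; exists c.
  by move=> /Bspan[c ->]; exists c.
apply/GLsP; exists (\matrix_i g (row i 1%:M)); apply: mulmx1C.
by apply/row_matrixP=> i; rewrite row_mul rowK; exact: gK.
Qed.

Definition Stab := [set g in GLs A (k + r) | ursubmx g == 0].

Lemma detunit_l m1 m2 (a : 'M[A]_m1) (c : 'M_(m2, m1)) d :
  block_mx a 0 c d \in GLs A (m1 + m2) -> a \in GLs A m1 /\ d \in GLs A m2.
Proof.
rewrite !inE det_lblock => /existsP[y /eqP e]; split; apply/existsP.
  by exists (\det d * y); rewrite mulrA e.
by exists (\det a * y); rewrite mulrA (mulrC (\det d)) e.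
Qed.

Lemma top_mul (g P : 'M[A]_(k + r)) : g \in Stab -> top (g *m P) = top P.
Proof.
rewrite inE => /andP[gGL /eqP g0].
have eg : g = block_mx (ulsubmx g) 0 (dlsubmx g) (drsubmx g) by rewrite -g0 submxK.
have [/GLs_inv[ai [aai aia]] _] : ulsubmx g \in GLs A k /\ drsubmx g \in GLs A r.
  by apply: (detunit_l (c := dlsubmx g)); rewrite -eg.
have eu : usubmx (g *m P) = ulsubmx g *m usubmx P.
  have eu0 : usubmx g = row_mx (ulsubmx g) 0 by rewrite -g0 hsubmxK.
  by rewrite -mul_usub_mx eu0 -{1}(vsubmxK P) mul_row_col mul0mx addr0.
apply/setP=> x; rewrite !inE eu; apply/existsP/existsP=> [[c /eqP->]|[c /eqP->]].
  by exists (c *m ulsubmx g); rewrite mulmxA.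
by exists (c *m ai); rewrite -mulmxA (mulmxA ai) aia mul1mx.
Qed.

Lemma fiber_eq (P : 'M[A]_(k + r)) : P \in GLs A (k + r) ->
  [set Q in GLs A (k + r) | top Q == top P] = [set g *m P | g in Stab].
Proof.
move=> PGL; have [Pi [PPi PiP]] := GLs_inv PGL.
have PiGL : Pi \in GLs A (k + r) by apply/GLsP; exists P.
apply/setP=> Q; rewrite inE; apply/andP/imsetP.
  case=> QGL /eqP tQ; exists (Q *m Pi); last by rewrite -mulmxA PiP mulmx1.
  rewrite inE GLsM //=.
  have hrow i : exists c : 'rV_k, row i (usubmx Q) == c *m usubmx P.
    have : row i (usubmx Q) \in top Q by rewrite inE; apply/existsP; exists (row i 1%:M); rewrite -row_mul mul1mx.
    by rewrite tQ inE => /existsP.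
  pose M := \matrix_i xchoose (hrow i).
  have eQ : usubmx Q = M *m usubmx P.
    by apply/row_matrixP=> i; rewrite row_mul rowK; apply/eqP/(xchooseP (hrow i)).
  rewrite /ursubmx -mul_usub_mx eQ -mulmxA mul_usub_mx PPi.
  rewrite -[usubmx _]hsubmxK mul_mx_row row_mxKr.
  by rewrite (scalar_mx_block k r) block_mxEv col_mxKu row_mxKr mulmx0.
case=> g gS ->; rewrite top_mul //; split=> //.
by apply: GLsM=> //; move: gS; rewrite inE => /andP[].
Qed.

Lemma card_fiber (P : 'M[A]_(k + r)) : P \in GLs A (k + r) ->
  #|[set Q in GLs A (k + r) | top Q == top P]| = #|Stab|.
Proof.
move=> PGL; rewrite fiber_eq //; apply: card_imset.
have [Pi [PPi PiP]] := GLs_inv PGL.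
by move=> g g' e; rewrite -[g]mulmx1 -PPi mulmxA e -mulmxA PPi mulmx1.
Qed.

Lemma card_Stab : #|Stab| = (#|GLs A k| * #|GLs A r| * #|A| ^ (k * r))%N.
Proof.
pose h (t : 'M[A]_k * 'M[A]_(r, k) * 'M[A]_r) := block_mx t.1.1 0 t.1.2 t.2.
have hinj : injective h.
  move=> [[a c] d] [[a' c'] d'] /= e.
  have e1 := congr1 ulsubmx e; have e2 := congr1 dlsubmx e; have e3 := congr1 drsubmx e.
  rewrite /= !block_mxKul in e1; rewrite /= !block_mxKdl in e2; rewrite /= !block_mxKdr in e3.
  by move: e1 e2 e3 => /= -> -> ->.
have -> : Stab = h @: setX (setX (GLs A k) setT) (GLs A r).
  apply/setP=> g; rewrite inE; apply/andP/imsetP.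
    case=> gGL /eqP g0.
    have eg : g = block_mx (ulsubmx g) 0 (dlsubmx g) (drsubmx g) by rewrite -g0 submxK.
    have [a1 d1] : ulsubmx g \in GLs A k /\ drsubmx g \in GLs A r.
      by apply: (detunit_l (c := dlsubmx g)); rewrite -eg.
    by exists (ulsubmx g, dlsubmx g, drsubmx g); [rewrite !in_setX a1 d1 in_setT | exact: eg].
  case=> [[[a c] d]]; rewrite !in_setX in_setT andbT /= => /andP[a1 d1] ->; split.
    rewrite inE /h /= det_lblock.
    move: a1 d1; rewrite !inE => /existsP[y /eqP ey] /existsP[z /eqP ez].
    by apply/existsP; exists (y * z); rewrite mulrACA ey ez mulr1.
  by rewrite /h block_mxKur.
by rewrite (card_imset _ hinj) !cardsX cardsT card_mx mulnAC [(r * k)%N]mulnC.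
Qed.

Lemma count_gr : #|GLs A (k + r)| = (#|Grassmannian A (k + r) k| * #|Stab|)%N.
Proof.
rewrite -sum1_card (partition_big top (mem (Grassmannian A (k + r) k))) /=; last first.
  by move=> P PGL; rewrite inE; apply/asboolP/top_gr.
rewrite -sum_nat_const; apply: eq_bigr=> V; rewrite inE => /asboolP/gr_top[P PGL <-].
by rewrite sum1dep_card card_fiber.
Qed.
End Gr.

Section Ideal.
Variable R : finComPzRingType.

Lemma idealP (I : {set R}) : is_ideal I ->
  [/\ 0 \in I, forall x y, x \in I -> y \in I -> x + y \in I &
      forall a x, x \in I -> a * x \in I].
Proof.
case/and3P=> I0 /forallP ID /forallP IM; split=> //.
  by move=> x y xI yI; move: (ID x) => /forallP/(_ y); rewrite xI yI.
by move=> a x xI; move: (IM a) => /forallP/(_ x); rewrite xI.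
Qed.

Lemma idealI (I : {set R}) : 0 \in I -> (forall x y, x \in I -> y \in I -> x + y \in I) ->
  (forall a x, x \in I -> a * x \in I) -> is_ideal I.
Proof.
move=> I0 ID IM; apply/and3P; split=> //.
  by apply/forallP=> x; apply/forallP=> y; apply/implyP=> xI; apply/implyP=> yI; apply: ID.
by apply/forallP=> a; apply/forallP=> x; apply/implyP=> xI; apply: IM.
Qed.

Lemma max_exists (I : {set R}) : is_ideal I -> (1 : R) \notin I ->
  exists M, is_maximal_ideal M && (I \subset M).
Proof.
move=> Iid I1.
pose PK (K : {set R}) := [&& is_ideal K, I \subset K & (1 : R) \notin K].
have PI : PK I by rewrite /PK Iid subxx.
case: (arg_maxnP (fun K : {set R} => #|K|) PI) => M /and3P[Mid IM M1] Mmax.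
exists M; rewrite IM andbT; apply/and3P; split=> //.
apply/forallP=> K; apply/implyP=> Kid; apply/implyP=> MK.
have [K1|K1] := boolP ((1 : R) \in K).
  apply/orP; right; apply/eqP/setP=> x; rewrite inE.
  by have [_ _ KM] := idealP Kid; rewrite -[x]mulr1 KM.
apply/orP; left; rewrite eq_sym eqEcard MK /=.
by apply: Mmax; rewrite /PK Kid K1 (subset_trans IM MK).
Qed.

Lemma one_plus_J j : j \in jacobson R -> exists z, (1 + j) * z = 1.
Proof.
move=> jJ.
have [/existsP[z /eqP e]|H] := boolP [exists z, (1 + j) * z == 1]; first by exists z.
pose I := [set y | [exists x, y == (1 + j) * x]].
have Iid : is_ideal I.
  apply: idealI.
  - by rewrite inE; apply/existsP; exists 0; rewrite mulr0.
  - move=> x y; rewrite !inE => /existsP[a /eqP->] /existsP[b /eqP->].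
    by apply/existsP; exists (a + b); rewrite mulrDr.
  - move=> a x; rewrite !inE => /existsP[b /eqP->].
    by apply/existsP; exists (a * b); rewrite mulrCA.
have I1 : (1 : R) \notin I.
  rewrite inE; apply: contra H => /existsP[x /eqP e]; apply/existsP; exists x.
  by rewrite -e.
have [M /andP[Mmax IM]] := max_exists Iid I1.
have jM : j \in M by move: jJ; rewrite inE => /forallP/(_ M); rewrite Mmax.
have [Mid M1 _] := and3P Mmax.
have [_ MD MM] := idealP Mid.
have j1M : 1 + j \in M.
  by apply: (subsetP IM); rewrite inE; apply/existsP; exists 1; rewrite mulr1.
have : (1 + j) + (- 1) * j \in M by apply: MD => //; apply: MM.
by rewrite mulN1r addrK (negbTE M1).
Qed.

Lemma J0 : (0 : R) \in jacobson R.
Proof.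
rewrite inE; apply/forallP=> M; apply/implyP=> /and3P[Mid _ _].
by have [] := idealP Mid.
Qed.
End Ideal.

Lemma unitb_field (K : finFieldType) (x : K) : unitb x = (x != 0).
Proof.
apply/existsP/idP=> [[y /eqP e]|nz]; last by exists x^-1; rewrite mulfV.
by apply/eqP=> x0; move/eqP: e; rewrite x0 mul0r eq_sym oner_eq0.
Qed.

Section Count.
Variables (R : finComPzRingType) (l : nat) (F : 'I_l -> finFieldType)
  (phi : forall i : 'I_l, {rmorphism R -> F i}).
Hypothesis phi_ker : forall x : R, (forall i, phi i x = 0) <-> x \in jacobson R.
Hypothesis phi_surj : forall y : (forall i : 'I_l, F i), exists x : R, forall i, phi i x = y i.

Lemma unit_iff (x : R) : unitb x = [forall i, phi i x != 0].
Proof.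
apply/existsP/forallP=> [[y /eqP e] i|H].
  apply/eqP=> x0; have := congr1 (phi i) e; rewrite rmorphM rmorph1 x0 mul0r.
  by move/eqP; rewrite eq_sym oner_eq0.
have [y Hy] := phi_surj (fun i => (phi i x)^-1).
have /phi_ker/one_plus_J[z ez] : forall i, phi i (x * y - 1) = 0.
  by move=> i; rewrite rmorphB rmorphM rmorph1 Hy mulfV ?subrr //; apply: H.
by exists (y * z); apply/eqP; rewrite mulrA; move: ez; rewrite addrC subrK.
Qed.

Variables m p : nat.

Definition Phi (P : 'M[R]_(m, p)) : {dffun forall i, 'M[F i]_(m, p)} :=
  finfun (fun i => map_mx (phi i) P).

Definition mxJ := [set D : 'M[R]_(m, p) | [forall a, forall b, D a b \in jacobson R]].

Lemma PhiE P P' : (Phi P == Phi P') = (P - P' \in mxJ).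
Proof.
apply/eqP/idP=> [e|].
  rewrite inE; apply/forallP=> a; apply/forallP=> b; apply/phi_ker=> i.
  move/ffunP: e => /(_ i)/matrixP/(_ a b).
  by rewrite /Phi !ffunE !mxE rmorphB => ->; rewrite subrr.
rewrite inE => /forallP H; apply/ffunP=> i; rewrite !ffunE; apply/matrixP=> a b.
rewrite !mxE; apply/eqP; rewrite -subr_eq0 -rmorphB; apply/eqP.
by move: (H a) => /forallP/(_ b); rewrite !mxE => /phi_ker; apply.
Qed.

Lemma Phi_surj y : exists P, Phi P = y.
Proof.
have h a b : exists x : R, [forall i, phi i x == y i a b].
  have [x Hx] := phi_surj (fun i => y i a b).
  by exists x; apply/forallP=> i; rewrite Hx.
exists (\matrix_(a, b) xchoose (h a b)); apply/ffunP=> i; rewrite ffunE.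
apply/matrixP=> a b; rewrite !mxE.
by move: (xchooseP (h a b)) => /forallP/(_ i)/eqP.
Qed.

Lemma card_mxJ : #|mxJ| = (#|jacobson R| ^ (m * p))%N.
Proof.
pose T := {x : R | x \in jacobson R}.
pose x0 : T := exist _ 0 (J0 R).
have -> : mxJ = [set map_mx val D | D : 'M[T]_(m, p)].
  apply/setP=> D; rewrite inE; apply/idP/imsetP.
    move=> /forallP H; exists (\matrix_(a, b) insubd x0 (D a b)) => //.
    apply/matrixP=> a b; rewrite !mxE insubdK //.
    by move: (H a) => /forallP/(_ b).
  case=> E _ ->; apply/forallP=> a; apply/forallP=> b; rewrite mxE.
  exact: valP.
rewrite card_imset; last first.
  move=> E E' e; apply/matrixP=> a b; apply: val_inj.
  by have /matrixP/(_ a b) := e; rewrite !mxE.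
by rewrite card_mx card_sig.
Qed.

Lemma count_sat (S : {set 'M[R]_(m, p)}) (G : forall i, {set 'M[F i]_(m, p)}) :
  (forall P, (P \in S) = [forall i, map_mx (phi i) P \in G i]) ->
  #|S| = (#|jacobson R| ^ (m * p) * \prod_i #|G i|)%N.
Proof.
move=> SG.
rewrite -sum1_card (partition_big Phi (mem (setXn G))) /=; last first.
  move=> P; rewrite SG => /forallP H; apply/setXnP=> i; rewrite ffunE; exact: H.
rewrite -cardsXn -card_mxJ mulnC -sum_nat_const; apply: eq_bigr=> y yG.
have [P0 eP0] := Phi_surj y.
rewrite sum1dep_card -eP0.
have -> : [set x in S | Phi x == Phi P0] = [set P0 + D | D in mxJ].
  apply/setP=> P; rewrite inE; apply/andP/imsetP.
    case=> _; rewrite PhiE => PJ; exists (P - P0) => //.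
    by rewrite addrC subrK.
  case=> D DJ ->; have e : Phi (P0 + D) == Phi P0 by rewrite PhiE addrAC subrr add0r.
  split=> //; rewrite SG; apply/forallP=> i.
  by move: yG => /setXnP/(_ i); rewrite -eP0 -(eqP e) ffunE.
by apply: card_imset; apply: addrI.
Qed.
End Count.

From mathcomp Require Import ring.

Lemma prodX (I : finType) (f : I -> nat) e :
  ((\prod_i f i) ^ e = \prod_i (f i ^ e))%N.
Proof. exact: (big_morph (fun x => x ^ e)%N (fun a b => expnMn a b e) (exp1n e)). Qed.

Unset Implicit Arguments. Set Strict Implicit.

Theorem mainTheorem18 (R : finComPzRingType) (l : nat)
    (F : 'I_l -> finFieldType) (phi : forall i : 'I_l, {rmorphism R -> F i})
    (phi_ker : forall x : R, (forall i, phi i x = 0) <-> x \in jacobson R)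
    (phi_surj : forall y : (forall i : 'I_l, F i), exists x : R, forall i, phi i x = y i)
    (n k : nat) (hkn : (k <= n)%N) :
  #|Grassmannian R n k| =
    (#|jacobson R| ^ (k * (n - k)) * \prod_(i < l) #|Grassmannian (F i) n k|)%N.
Proof.
have [r ->] : exists r, n = (k + r)%N by exists (n - k)%N; rewrite subnKC.
rewrite addKn.
have hGL m : #|GLs R m| = (#|jacobson R| ^ (m * m) * \prod_i #|GLs (F i) m|)%N.
  apply: (count_sat phi_ker phi_surj) => P.
  rewrite inE (unit_iff phi_ker phi_surj); apply: eq_forallb => i.
  by rewrite inE unitb_field det_map_mx.
have hcard : #|R| = (#|jacobson R| * \prod_i #|F i|)%N.
  have := count_sat phi_ker phi_surj (S := [set: 'M[R]_(1, 1)])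
    (G := fun i => [set: 'M[F i]_(1, 1)]).
  rewrite cardsT card_mx !expn1 => ->; last by move=> P; rewrite inE; apply/esym/forallP=> i; rewrite inE.
  by congr (_ * _)%N; apply: eq_bigr => i _; rewrite cardsT card_mx expn1.
have hR := count_gr R k r; rewrite card_Stab in hR.
have hF i := count_gr (F i) k r.
have eF : (\prod_i #|GLs (F i) (k + r)| = \prod_i #|Grassmannian (F i) (k + r) k| *
     \prod_i (#|GLs (F i) k| * #|GLs (F i) r| * #|F i| ^ (k * r)))%N.
  rewrite -big_split /=; apply: eq_bigr => i _; rewrite hF card_Stab //.
set Q := (\prod_i (#|GLs (F i) k| * #|GLs (F i) r| * #|F i| ^ (k * r)))%N in eF.
have eQ : Q = (\prod_i #|GLs (F i) k| * \prod_i #|GLs (F i) r| * (\prod_i #|F i|) ^ (k * r))%N.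
  by rewrite prodX -!big_split.
set J := #|jacobson R|.
have Jpos : (0 < J)%N by apply/card_gt0P; exists 0; exact: J0.
have Qpos : (0 < Q)%N.
  rewrite prodn_gt0 // => i.
  have h1 m : (0 < #|GLs (F i) m|)%N by apply/card_gt0P; exists 1%:M; exact: GLs1.
  have h2 : (0 < #|F i|)%N by apply/card_gt0P; exists 0.
  by rewrite !muln_gt0 expn_gt0 h1 h1 h2.
rewrite hGL eF hGL hGL hcard in hR.
have Xpos : (0 < J ^ (k * k) * J ^ (r * r) * J ^ (k * r) * Q)%N.
  by rewrite !muln_gt0 !expn_gt0 Jpos Qpos.
apply/eqP; rewrite -(eqn_pmul2r Xpos); apply/eqP.
rewrite eQ -!mulnA; rewrite eQ in hR.
move: hR; set G := (\prod_i #|Grassmannian (F i) (k + r) k|)%N.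
set g := #|Grassmannian R (k + r) k|.
set a := (\prod_i #|GLs (F i) k|)%N; set b := (\prod_i #|GLs (F i) r|)%N.
set f := (\prod_i #|F i|)%N.
rewrite expnMn.
have -> : ((k + r) * (k + r) = k * r + (k * k + r * r + k * r))%N by ring.
rewrite !expnD => hR.
rewrite -/J in hR.
apply: etrans (_ : _ = (g * (J ^ (k * k) * a * (J ^ (r * r) * b) * (J ^ (k * r) * f ^ (k * r))))%N) _.
  ring.
rewrite -hR; ring.
Qed.
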